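(* For all $n\in\mathbb N$, \[ L^n(J)-L_0^n(J)=\sum_{j=0}^{n-1}L^j(\eta_{n-j}),\qquad\text{where }\eta_n:=L\big(L_0^{n-1}(J)\big)-L_0^n(J), \] and $\eta_n$ satisfies \[ \eta_n=\sum_{s=0}^\infty\alpha(n-1,s)\Big[\frac1N\mathrm{diag}(Q^s)+\mathrm{diag}\big(Q\,\mathrm{diag}(Q^s)J\big)-\frac{2\,\mathrm{tr}(Q^s)}{N^2}I-\frac1N\mathrm{diag}(Q^s)Q-\frac1NQ\,\mathrm{diag}(Q^s)+\frac{2\,\mathrm{tr}(Q^s)}{N^2}Q\Big]. \]
   Context: $E$ is a finite set with $N=\#E>8$ elements, listed in a fixed order; $\mathsf M_E$ is the space of complex $N\times N$ matrices indexed by $E\times E$; $|x\rangle,\langle x|$ are standard unit column/row vectors, $C^*$ is transpose. $Q$ is an irreducible stochastic matrix on $E$ with $Q(x,y)=Q(y,x)$ for all $x,y$ and $\mathrm{tr}(Q)=0$. $I$ is the identity, $J$ the matrix with all entries $1/N$, $\mathrm{diag}(C)=\sum_x|x\rangle\langle x|C|x\rangle\langle x|$. Let $(U,V)$ be random with $\mathbb P(U=x,V=y)=\frac1NQ(x,y)$, $T=I-|U\rangle\langle U|+|U\rangle\langle V|$, and $L(C)=\mathbb E[T^*CT]$. $L_0(C)=\frac{N-2}NC+\frac1N(CQ+QC)-\frac{2\,\mathrm{tr}(C)}{N^2}Q+\frac{2\,\mathrm{tr}(C)}{N^2}I$. Powers of $L$, $L_0$ are compositions ($L^0=L_0^0=$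 identity). The function $\alpha:\mathbb Z_+\times\mathbb Z_+\to\mathbb R$ is defined by $\alpha(0,s)=0$ and, for $n\in\mathbb Z_+$, $\alpha(n+1,0)=\frac2{N^2}+\alpha(n,0)+\frac2{N^2}\sum_{s\ge1}\alpha(n,s)\mathrm{tr}(Q^s)$, $\alpha(n+1,1)=-\frac2{N^2}+\frac{N-2}N\alpha(n,1)-\frac2{N^2}\sum_{s\ge1}\alpha(n,s)\mathrm{tr}(Q^s)$, $\alpha(n+1,s)=\frac{N-2}N\alpha(n,s)+\frac2N\alpha(n,s-1)$ for $s\ge2$ (so $\alpha(n,s)=0$ for $s\ge n+1$). *)

(* Defs.v *)
(* Complex scalars: an arbitrary numClosedFieldType R
   (the library's abstraction of the complex numbers). E = 'I_N. *)
From HB Require Import structures.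
From mathcomp Require Import all_boot all_order all_algebra.
Set Implicit Arguments. Unset Strict Implicit. Unset Printing Implicit Defensive.
Import Order.TTheory GRing.Theory Num.Theory.
Local Open Scope ring_scope.

Section Defs.
Variable R : fieldType.
Variable N : nat.
Implicit Types (Q C : 'M[R]_N).

Definition mdiag C : 'M[R]_N := \matrix_(i, j) ((i == j)%:R * C i j).

Definition Jm : 'M[R]_N := const_mx (N%:R)^-1.

(* T = I - |x><x| + |x><y| for the outcome (U,V) = (x,y) *)
Definition Tm (x y : 'I_N) : 'M[R]_N := 1%:M - delta_mx x x + delta_mx x y.

(* L(C) = E[T^* C T] with P(U=x,V=y) = Q(x,y)/N ; T^* = transpose *)
Definition Lop Q C : 'M[R]_N :=
  \sum_(x < N) \sum_(y < N) ((N%:R)^-1 * Q x y) *: ((Tm x y)^T *m C *m Tm x y).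

Definition L0op Q C : 'M[R]_N :=
  ((N%:R - 2) / N%:R) *: C + (N%:R)^-1 *: (C *m Q + Q *m C)
  - (2 * \tr C / N%:R ^+ 2) *: Q + (2 * \tr C / N%:R ^+ 2) *: 1%:M.

(* eta_n := L(L_0^{n-1}(J)) - L_0^n(J)  (meaningful for n >= 1) *)
Definition etan Q (n : nat) : 'M[R]_N :=
  Lop Q (iter n.-1 (L0op Q) Jm) - iter n (L0op Q) Jm.

(* alpha(n, s).  The sums sum_{s>=1} alpha(n,s) tr(Q^s) are taken over
   1 <= s <= n, which contains every possibly nonzero term, since
   alpha(n,s) = 0 for s >= n+1 (by induction from the recursion). *)
Fixpoint alpha Q (n : nat) : nat -> R :=
  match n with
  | 0 => fun _ => 0
  | n'.+1 =>
      let a := alpha Q n' in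
      let S := \sum_(1 <= s < n'.+1) a s * \tr (Q ^+ s) in
      fun s => match s with
        | 0 => 2 / N%:R ^+ 2 + a 0%N + 2 / N%:R ^+ 2 * S
        | 1 => - (2 / N%:R ^+ 2) + (N%:R - 2) / N%:R * a 1%N - 2 / N%:R ^+ 2 * S
        | s'.+2 => (N%:R - 2) / N%:R * a s'.+2 + 2 / N%:R * a s'.+1
        end
  end.

End Defs.

Definition stochastic (R : numFieldType) (N : nat) (Q : 'M[R]_N) : Prop :=
  (forall x y, 0 <= Q x y) /\ (forall x, \sum_(y < N) Q x y = 1).

Definition irreducible_mx (R : numFieldType) (N : nat) (Q : 'M[R]_N) : Prop :=
  forall x y, exists k : nat, 0 < (Q ^+ k) x y.

(* Main.v *)
Require Import Defs.
From HB Require Import structures.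
From mathcomp Require Import all_boot all_order all_algebra ring zify.
Import Order.TTheory GRing.Theory Num.Theory.
Set Implicit Arguments. Unset Strict Implicit.
Local Open Scope ring_scope.

Lemma sum_delta_l (R : fieldType) (n:nat) (i : 'I_n) (f : 'I_n -> R) :
  \sum_k (k == i)%:R * f k = f i.
Proof. rewrite (bigD1 i) //= eqxx mul1r big1 ?addr0 // => k /negbTE ->; by rewrite mul0r. Qed.

Definition aa (R : fieldType) (N : nat) (i x y : 'I_N) : R := (i == y)%:R - (i == x)%:R.

Arguments aa R {N}.

Lemma Tm_entry (R : fieldType) N (x y k l : 'I_N) :
  Tm R x y k l = (k == l)%:R + (k == x)%:R * aa R l x y.
Proof.
rewrite /Tm /aa !mxE. case: (k == x); case: (l==x); case: (l==y); case: (k==l); simpl; ring.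
Qed.

Lemma TCT_entry (R : fieldType) N (C : 'M[R]_N) (x y i j : 'I_N) :
  ((Tm R x y)^T *m C *m Tm R x y) i j =
  C i j + aa R i x y * C x j + aa R j x y * C i x + aa R i x y * aa R j x y * C x x.
Proof.
rewrite mxE.
have inner l : ((Tm R x y)^T *m C) i l = C i l + aa R i x y * C x l.
  rewrite mxE (eq_bigr (fun k => (k==i)%:R * C k l + aa R i x y * ((k==x)%:R * C k l))).
    by rewrite big_split /= -mulr_sumr !sum_delta_l.
  by move=> k _; rewrite mxE Tm_entry; ring.
rewrite (eq_bigr (fun l => (l == j)%:R * (C i l + aa R i x y * C x l) + aa R j x y * ((l == x)%:R * (C i l + aa R i x y * C x l)))).
  rewrite big_split /= -mulr_sumr !sum_delta_l; ring.
by move=> l _; rewrite inner Tm_entry; ring.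
Qed.

Lemma sum_delta_r (R : fieldType) (n:nat) (i : 'I_n) (f : 'I_n -> R) :
  \sum_k (i == k)%:R * f k = f i.
Proof. rewrite -[RHS](sum_delta_l i); apply: eq_bigr => k _; by rewrite eq_sym. Qed.

Lemma dd (R : fieldType) n (i j y : 'I_n) :
  (i == y)%:R * (j == y)%:R = (i == y)%:R * (j == i)%:R :> R.
Proof. by case: (eqVneq i y) => [->|h] //; rewrite !mul0r. Qed.

Lemma Lop_entry (R : fieldType) N (Q C : 'M[R]_N) (hN : N%:R != 0 :> R)
  (rowQ : forall x, \sum_y Q x y = 1) (symQ : forall x y, Q x y = Q y x) i j :
  Lop Q C i j = C i j + N%:R^-1 * ((Q *m C) i j - C i j)
     + N%:R^-1 * ((C *m Q) i j - C i j)
     + N%:R^-1 * ((i==j)%:R * \sum_x Q i x * C x x - Q i j * C j j - Q i j * C i i + (i==j)%:R * C i i).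
Proof.
rewrite /Lop summxE.
under eq_bigr => x _ do rewrite summxE.
have E x y : ((N%:R^-1 * Q x y) *: ((Tm R x y)^T *m C *m Tm R x y)) i j =
  (N%:R^-1 * C i j) * Q x y
  + (i == y)%:R * (N%:R^-1 * Q x y * C x j) - ((i == x)%:R * N%:R^-1 * C x j) * Q x y
  + (j == y)%:R * (N%:R^-1 * Q x y * C i x) - ((j == x)%:R * N%:R^-1 * C i x) * Q x y
  + (i == y)%:R * (N%:R^-1 * Q x y * (j == i)%:R * C x x)
  - (i == y)%:R * (N%:R^-1 * Q x y * (j == x)%:R * C x x)
  - (j == y)%:R * ((i == x)%:R * N%:R^-1 * Q x y * C x x)
  + ((i == x)%:R * (j == x)%:R * N%:R^-1 * C x x) * Q x y.
  rewrite mxE TCT_entry /aa.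
  have h1 := dd R i j y.
  transitivity (N%:R^-1 * Q x y * (C i j + ((i == y)%:R - (i == x)%:R) * C x j +
    ((j == y)%:R - (j == x)%:R) * C i x +
    ((i == y)%:R * (j == y)%:R - (i == y)%:R * (j == x)%:R - (i == x)%:R * (j == y)%:R + (i == x)%:R * (j == x)%:R) * C x x)).
    congr (_ * _); ring.
  rewrite h1; ring.
under eq_bigr => x _ do under eq_bigr => y _ do rewrite E.
transitivity (\sum_x (N%:R^-1 * C i j + N%:R^-1 * (Q i x * C x j) - (i == x)%:R * (N%:R^-1 * C x j)
   + N%:R^-1 * (C i x * Q x j) - (j==x)%:R * (N%:R^-1 * C i x)
   + (j==i)%:R * N%:R^-1 * (Q i x * C x x) - (j == x)%:R * (N%:R^-1 * Q i x * C x x)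
   - (i==x)%:R * (N%:R^-1 * Q x j * C x x) + (i==x)%:R * ((j==x)%:R * (N%:R^-1 * C x x)))).
  apply: eq_bigr => x _.
  rewrite !big_split /= !sumrN !sum_delta_r -!mulr_sumr !rowQ (symQ x i).
  ring.
rewrite !big_split /= !sumrN !sum_delta_r -!mulr_sumr !mxE sumr_const card_ord -[C i j *+ N]mulr_natr [j == i]eq_sym.
by field.
Qed.

Definition Br (R : fieldType) N (Q C : 'M[R]_N) : 'M[R]_N :=
  (N%:R)^-1 *: mdiag C
          + mdiag (Q *m mdiag C *m Jm R N)
          - (2 * \tr C / N%:R ^+ 2) *: 1%:M
          - (N%:R)^-1 *: (mdiag C *m Q)
          - (N%:R)^-1 *: (Q *m mdiag C)
          + (2 * \tr C / N%:R ^+ 2) *: Q.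

Lemma mdiagE (R : fieldType) N (C : 'M[R]_N) :
  mdiag C = \matrix_(i, j) ((i == j)%:R * C i i).
Proof. apply/matrixP => i j; rewrite !mxE; by case: (eqVneq i j) => [->|_]; rewrite ?mul0r. Qed.

Lemma mdiag_mull (R : fieldType) N (C Q : 'M[R]_N) :
  mdiag C *m Q = \matrix_(i, j) (C i i * Q i j).
Proof.
apply/matrixP => i j; rewrite !mxE mdiagE.
under eq_bigr => k _ do rewrite mxE -mulrA.
by rewrite sum_delta_r.
Qed.

Lemma mdiag_mulr (R : fieldType) N (C Q : 'M[R]_N) :
  Q *m mdiag C = \matrix_(i, j) (Q i j * C j j).
Proof.
apply/matrixP => i j; rewrite !mxE mdiagE.
under eq_bigr => k _ do rewrite mxE mulrCA.
by rewrite sum_delta_l.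
Qed.

Lemma mdiagQJ (R : fieldType) N (C Q : 'M[R]_N) :
  mdiag (Q *m mdiag C *m Jm R N) = \matrix_(i, j) ((i == j)%:R * (N%:R^-1 * \sum_k Q i k * C k k)).
Proof.
rewrite mdiag_mulr; apply/matrixP => i j; rewrite !mxE; congr (_ * _).
rewrite mulr_sumr; apply: eq_bigr => k _; rewrite !mxE; ring.
Qed.

Lemma Lop_eq (R : fieldType) N (Q C : 'M[R]_N) (hN : N%:R != 0 :> R)
  (rowQ : forall x, \sum_y Q x y = 1) (symQ : forall x y, Q x y = Q y x) :
  Lop Q C = L0op Q C + Br Q C.
Proof.
apply/matrixP => i j; rewrite Lop_entry // /L0op /Br mdiagQJ mdiag_mull mdiag_mulr mdiagE /mxtrace !mxE.
by field.
Qed.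

Lemma mdiagD (R : fieldType) N (A B : 'M[R]_N) : mdiag (A + B) = mdiag A + mdiag B.
Proof. apply/matrixP => i j; rewrite !mxE; ring. Qed.

Lemma mdiagZ (R : fieldType) N c (A : 'M[R]_N) : mdiag (c *: A) = c *: mdiag A.
Proof. apply/matrixP => i j; rewrite !mxE; ring. Qed.

Lemma BrD (R : fieldType) N (Q A B : 'M[R]_N) : Br Q (A + B) = Br Q A + Br Q B.
Proof.
rewrite /Br !mdiagQJ !mdiag_mull !mdiag_mulr !mdiagE /mxtrace.
apply/matrixP => i j; rewrite !mxE.
have e1 : \sum_k Q i k * (A + B) k k = \sum_k Q i k * A k k + \sum_k Q i k * B k k.
  by rewrite -big_split; apply: eq_bigr => k _; rewrite /= mxE; ring.
have e2 : \sum_k (A + B) k k = \sum_k A k k + \sum_k B k k.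
  by rewrite -big_split; apply: eq_bigr => k _; rewrite /= mxE.
rewrite e1 e2; ring.
Qed.

Lemma BrZ (R : fieldType) N (Q A : 'M[R]_N) c : Br Q (c *: A) = c *: Br Q A.
Proof.
rewrite /Br !mdiagQJ !mdiag_mull !mdiag_mulr !mdiagE /mxtrace.
apply/matrixP => i j; rewrite !mxE.
have e1 : \sum_k Q i k * (c *: A) k k = c * \sum_k Q i k * A k k.
  by rewrite mulr_sumr; apply: eq_bigr => k _; rewrite mxE; ring.
have e2 : \sum_k (c *: A) k k = c * \sum_k A k k.
  by rewrite mulr_sumr; apply: eq_bigr => k _; rewrite mxE.
rewrite e1 e2; ring.
Qed.

Lemma Br0 (R : fieldType) N (Q : 'M[R]_N) : Br Q 0 = 0.
Proof. by have := BrZ Q 0 0; rewrite !scale0r. Qed.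

Lemma Br_sum (R : fieldType) N (Q : 'M[R]_N) M (F : 'I_M -> 'M[R]_N) :
  Br Q (\sum_(s < M) F s) = \sum_(s < M) Br Q (F s).
Proof. exact: (big_morph (Br Q) (@BrD R N Q) (Br0 Q)). Qed.

Lemma sumQJ (R : fieldType) N (Q : 'M[R]_N)
  (rowQ : forall x, \sum_y Q x y = 1) i : \sum_k Q i k * Jm R N k k = N%:R^-1.
Proof.
rewrite (eq_bigr (fun k => Q i k * N%:R^-1)) => [|k _]; last by rewrite mxE.
by rewrite -mulr_suml rowQ mul1r.
Qed.

Lemma trJ (R : fieldType) N (hN : N%:R != 0 :> R) : \sum_(k < N) Jm R N k k = 1.
Proof.
under eq_bigr => k _ do rewrite mxE.
by rewrite sumr_const card_ord -[_ *+ N]mulr_natr mulVf.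
Qed.

Lemma BrJ (R : fieldType) N (Q : 'M[R]_N) (hN : N%:R != 0 :> R)
  (rowQ : forall x, \sum_y Q x y = 1) : Br Q (Jm R N) = 0.
Proof.
rewrite /Br mdiagQJ mdiag_mull mdiag_mulr mdiagE /mxtrace.
apply/matrixP => i j.
rewrite !mxE /= sumQJ // trJ //.
by field.
Qed.

Lemma alpha_zero (R : fieldType) N (Q : 'M[R]_N) k s : (k < s)%N -> alpha Q k s = 0.
Proof.
elim: k s => [|k IH] s hs //=.
case: s hs => [|[|s]] // hs.
rewrite !IH ?mulr0 ?addr0 //; lia.
Qed.

Lemma L0D (R : fieldType) N (Q A B : 'M[R]_N) : L0op Q (A + B) = L0op Q A + L0op Q B.
Proof.
rewrite /L0op mulmxDl mulmxDr mxtraceD.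
apply/matrixP => i j; rewrite !mxE; ring.
Qed.

Lemma L0Z (R : fieldType) N (Q A : 'M[R]_N) c : L0op Q (c *: A) = c *: L0op Q A.
Proof.
rewrite /L0op -scalemxAl -scalemxAr mxtraceZ.
apply/matrixP => i j; rewrite !mxE; ring.
Qed.

Lemma L00 (R : fieldType) N (Q : 'M[R]_N) : L0op Q 0 = 0.
Proof. by have := L0Z Q 0 0; rewrite !scale0r. Qed.

Lemma L0_sum (R : fieldType) N (Q : 'M[R]_N) M (F : 'I_M -> 'M[R]_N) :
  L0op Q (\sum_(s < M) F s) = \sum_(s < M) L0op Q (F s).
Proof. exact: (big_morph (L0op Q) (@L0D R N Q) (L00 Q)). Qed.

Lemma JQ (R : fieldType) N (Q : 'M[R]_N) (rowQ : forall x, \sum_y Q x y = 1)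
  (symQ : forall x y, Q x y = Q y x) : Jm R N *m Q = Jm R N.
Proof.
apply/matrixP => i j; rewrite !mxE.
rewrite (eq_bigr (fun k => N%:R^-1 * Q j k)) => [|k _]; last by rewrite mxE symQ.
by rewrite -mulr_sumr rowQ mulr1.
Qed.

Lemma QJ (R : fieldType) N (Q : 'M[R]_N) (rowQ : forall x, \sum_y Q x y = 1) :
  Q *m Jm R N = Jm R N.
Proof.
apply/matrixP => i j; rewrite !mxE.
rewrite (eq_bigr (fun k => Q i k * N%:R^-1)) => [|k _]; last by rewrite mxE.
by rewrite -mulr_suml rowQ mul1r.
Qed.

Lemma L0J (R : fieldType) N (Q : 'M[R]_N) (hN : N%:R != 0 :> R)
  (rowQ : forall x, \sum_y Q x y = 1) (symQ : forall x y, Q x y = Q y x) :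
  L0op Q (Jm R N) = Jm R N + (2 / N%:R ^+ 2) *: (1%:M - Q).
Proof.
rewrite /L0op JQ // QJ // /mxtrace trJ //.
apply/matrixP => i j; rewrite !mxE; by field.
Qed.

Lemma L0Qs (R : fieldType) N (Q : 'M[R]_N) s :
  L0op Q (Q ^+ s) = ((N%:R - 2) / N%:R) *: Q ^+ s + (2 / N%:R) *: Q ^+ s.+1
    - (2 * \tr (Q ^+ s) / N%:R ^+ 2) *: Q + (2 * \tr (Q ^+ s) / N%:R ^+ 2) *: 1%:M.
Proof.
rewrite /L0op !mulmxE -exprSr -exprS.
apply/matrixP => i j; rewrite !mxE; ring.
Qed.

Lemma step_scalar (R : fieldType) (Nr : R) (hN : Nr != 0) (a b q t : nat -> R) k m
  (hk : (k.+1 < m.+2)%N) (az : forall s, (k < s)%N -> a s = 0) (t0 : t 0%N = Nr)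
  (Qij dl : R) (q0 : q 0%N = dl) (q1 : q 1%N = Qij)
  (b0 : b 0%N = 2 / Nr ^+ 2 + a 0%N + 2 / Nr ^+ 2 * \sum_(1 <= s < k.+1) a s * t s)
  (b1 : b 1%N = - (2 / Nr ^+ 2) + (Nr - 2) / Nr * a 1%N - 2 / Nr ^+ 2 * \sum_(1 <= s < k.+1) a s * t s)
  (b2 : forall s, b s.+2 = (Nr - 2) / Nr * a s.+2 + 2 / Nr * a s.+1) :
  Nr^-1 + 2 / Nr ^+ 2 * (dl - Qij) +
  \sum_(s < m.+2) a s * ((Nr - 2) / Nr * q s + 2 / Nr * q s.+1
      - 2 * t s / Nr ^+ 2 * Qij + 2 * t s / Nr ^+ 2 * dl)
  = Nr^-1 + \sum_(s < m.+2) b s * q s.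
Proof.
set S := \sum_(1 <= s < k.+1) a s * t s.
have E1 : \sum_(s < m.+2) a s * ((Nr - 2) / Nr * q s + 2 / Nr * q s.+1
      - 2 * t s / Nr ^+ 2 * Qij + 2 * t s / Nr ^+ 2 * dl)
  = (Nr - 2) / Nr * \sum_(s < m.+2) a s * q s + 2 / Nr * \sum_(s < m.+2) a s * q s.+1
    - (2 / Nr ^+ 2 * Qij) * \sum_(s < m.+2) a s * t s + (2 / Nr ^+ 2 * dl) * \sum_(s < m.+2) a s * t s.
  rewrite !big_distrr /= -big_split -sumrB -big_split /=; apply: eq_bigr => s _; ring.
have EX : \sum_(s < m.+2) a s * q s = a 0%N * dl + a 1%N * Qij + \sum_(s < m) a s.+2 * q s.+2.
  by rewrite !big_ord_recl /= /bump !leq0n !add1n q0 q1 addrA.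
have EY : \sum_(s < m.+2) a s * q s.+1 = a 0%N * Qij + \sum_(s < m) a s.+1 * q s.+2.
  rewrite big_ord_recr /= az; last by lia.
  by rewrite mul0r addr0 big_ord_recl /= q1.
have EZ : \sum_(s < m.+2) a s * t s = a 0%N * Nr + S.
  rewrite big_ord_recl /= t0; congr (_ + _).
  rewrite /S big_add1 /= -(big_mkord xpredT (fun s => a s.+1 * t s.+1)).
  rewrite (big_cat_nat _ (n := k)) //=; last by lia.
  rewrite [X in _ + X = _]big1_seq ?addr0 // => s /andP[_].
  by rewrite mem_index_iota => /andP[hs _]; rewrite az ?mul0r //; lia.
have ER : \sum_(s < m.+2) b s * q s = b 0%N * dl + b 1%N * Qij
    + (Nr - 2) / Nr * \sum_(s < m) a s.+2 * q s.+2 + 2 / Nr * \sum_(s < m) a s.+1 * q s.+2.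
  rewrite !big_ord_recl /= /bump !leq0n !add1n q0 q1 -!addrA; congr (_ + (_ + _)).
  rewrite !big_distrr -big_split /=; apply: eq_bigr => s _; rewrite b2; ring.
rewrite E1 EX EY EZ ER b0 b1.
rewrite /S; by field.
Qed.

Lemma L0iter (R : fieldType) N (Q : 'M[R]_N) (hN : N%:R != 0 :> R)
  (rowQ : forall x, \sum_y Q x y = 1) (symQ : forall x y, Q x y = Q y x) k M :
  (k < M)%N -> iter k (L0op Q) (Jm R N) = Jm R N + \sum_(s < M) alpha Q k s *: Q ^+ s.
Proof.
elim: k M => [|k IH] M hM.
  by rewrite big1 ?addr0 // => s _; rewrite /= scale0r.
rewrite iterS (IH M) ?(ltnW hM) // L0D L0J // L0_sum.
under eq_bigr => s _ do rewrite L0Z L0Qs.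
case: M hM => [|[|m]] // hM.
apply/matrixP => i j; rewrite !mxE !summxE.
under eq_bigr => s _ do rewrite !mxE.
under [in RHS]eq_bigr => s _ do rewrite !mxE.
apply: (@step_scalar R N%:R hN (alpha Q k) (alpha Q k.+1) (fun s => (Q ^+ s) i j)
  (fun s => \tr (Q ^+ s)) k m hM (@alpha_zero R N Q k)) => //=.
- by rewrite expr0 mxtrace1.
- by rewrite expr0 mxE.
Qed.

Lemma LopB (R : fieldType) N (Q A B : 'M[R]_N) : Lop Q (A - B) = Lop Q A - Lop Q B.
Proof.
rewrite /Lop -sumrB; apply: eq_bigr => x _; rewrite -sumrB; apply: eq_bigr => y _.
by rewrite mulmxBr mulmxBl scalerBr.
Qed.

Lemma iterB (R : fieldType) N (Q A B : 'M[R]_N) j :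
  iter j (Lop Q) (A - B) = iter j (Lop Q) A - iter j (Lop Q) B.
Proof. by elim: j => [|j IH] //=; rewrite IH LopB. Qed.

Unset Implicit Arguments.
Set Strict Implicit.

Theorem lemma4p7 (R : numClosedFieldType) (N : nat) (Q : 'M[R]_N) :
  (8 < N)%N ->
  stochastic Q ->
  irreducible_mx Q ->
  (forall x y, Q x y = Q y x) ->
  \tr Q = 0 ->
  (forall n : nat,
     iter n (Lop Q) (Jm R N) - iter n (L0op Q) (Jm R N)
     = \sum_(j < n) iter j (Lop Q) (etan Q (n - j)%N)) /\
  (forall n M : nat, (0 < n)%N -> (n <= M)%N ->
     etan Q n
     = \sum_(s < M) alpha Q n.-1 s *:
         ((N%:R)^-1 *: mdiag (Q ^+ s)
          + mdiag (Q *m mdiag (Q ^+ s) *m Jm R N)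
          - (2 * \tr (Q ^+ s) / N%:R ^+ 2) *: 1%:M
          - (N%:R)^-1 *: (mdiag (Q ^+ s) *m Q)
          - (N%:R)^-1 *: (Q *m mdiag (Q ^+ s))
          + (2 * \tr (Q ^+ s) / N%:R ^+ 2) *: Q)).
Proof.
move=> hN8 [_ rowQ] _ symQ _.
have hN : N%:R != 0 :> R by rewrite pnatr_eq0; apply/eqP; lia.
split.
  move=> n.
  rewrite -(big_mkord xpredT (fun j => iter j (Lop Q) (etan Q (n - j)))).
  rewrite (@telescope_sumr_eq _ 0 n (fun k => iter k (Lop Q) (iter (n - k) (L0op Q) (Jm R N)))) //.
    by rewrite subnn subn0.
  move=> k /andP[_ hk].
  by rewrite /etan iterB -iterSr -subnS.
move=> [|n] M // _ hM.
rewrite /etan /= Lop_eq // [L0op _ _ + _]addrC addrK (L0iter hN rowQ symQ (M := M)) //.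
rewrite BrD BrJ // add0r Br_sum; apply: eq_bigr => s _; by rewrite BrZ.
Qed.
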